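(* Let $G=(G_1,G_2,G_3)$ be a mean zero Gaussian vector whose covariance matrix $\Gamma$ is strictly positive definite and irreducible, with $\Gamma^{-1}$ an $M$-matrix, and suppose $\Gamma_{i,j}\le\Gamma_{i,i}\wedge\Gamma_{j,j}$ for all $i,j$. Let $D_i=\sum_k(\Gamma^{-1})_{i,k}$ and $\mathcal D=\{(i,j):D_iD_j<0\}$. Then the upper bound for the critical point of $G$ is non-zero: if $\mathcal D\neq\emptyset$, then $\inf_{(i,j)\in\mathcal D}\big((\Gamma^{-1})_{i,j}/(2D_iD_j)\big)^{1/2}>0$; equivalently, there is no $(i,j)\in\mathcal D$ with $(\Gamma^{-1})_{i,j}=0$. *)

(* Defs.v *)
From mathcomp Require Import all_boot all_order all_algebra.
From mathcomp Require Import reals.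
Set Implicit Arguments. Unset Strict Implicit. Unset Printing Implicit Defensive.
Import Order.TTheory GRing.Theory Num.Theory.
Local Open Scope ring_scope.

Section Defs.
Variable R : realFieldType.

Definition posdef_mx n (A : 'M[R]_n) : Prop :=
  A^T = A /\ forall v : 'rV[R]_n, v != 0 -> 0 < (v *m A *m v^T) 0 0.

Definition irreducible_mx n (A : 'M[R]_n) : Prop :=
  forall S : {set 'I_n}, S != set0 -> S != setT ->
    exists i j, [/\ i \in S, j \notin S & A i j != 0].

Definition Mmatrix n (A : 'M[R]_n) : Prop :=
  [/\ A \in unitmx,
      (forall i j, i != j -> A i j <= 0)
    & (forall i j, 0 <= (invmx A) i j)].

Definition rowsum n (A : 'M[R]_n) (i : 'I_n) : R := \sum_(k < n) A i k.
End Defs.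

(* Main.v *)
Require Import Defs.
From mathcomp Require Import all_boot all_order all_algebra.
From mathcomp Require Import reals.
From mathcomp Require Import ring lra.
Import Order.TTheory GRing.Theory Num.Theory.
Local Open Scope ring_scope.

Lemma sum3 (R : realFieldType) (F : 'I_3 -> R) {i j k : 'I_3} :
  i != j -> i != k -> j != k -> \sum_(m < 3) F m = F i + F j + F k.
Proof.
have [G FG] : exists G : nat -> R, forall a : 'I_3, F a = G (val a).
  by exists (fun n => F (inord n)) => a; rewrite inord_val.
rewrite !big_ord_recr big_ord0 /= add0r !FG /=.
case: i => [[|[|[|?]]] Hi] //; case: j => [[|[|[|?]]] Hj] //;
case: k => [[|[|[|?]]] Hk] //= _ _ _; ring.
Qed.

Lemma key (R : realFieldType) (A G : 'M[R]_3) (i j k : 'I_3) :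
  i != j -> i != k -> j != k ->
  A *m G = 1%:M -> A^T = A ->
  (forall a b, a != b -> A a b <= 0) -> (forall a b, 0 <= G a b) ->
  G i k <= G k k -> G j k <= G k k -> A i j = 0 ->
  0 <= rowsum A i * rowsum A j.
Proof.
move=> nij nik njk AG AT off pos Gik Gjk Aij.
have E a b : \sum_(m < 3) A a m * G m b = (a == b)%:R.
  by have := congr1 (fun M : 'M[R]_3 => M a b) AG; rewrite !mxE.
have Aji : A j i = 0 by have := congr1 (fun M : 'M[R]_3 => M i j) AT; rewrite mxE Aij.
have Ajk := off _ _ njk; have Aik := off _ _ nik.
have Aki := off k i ltac:(by rewrite eq_sym).
have Akj := off k j ltac:(by rewrite eq_sym).
have e1 := E i k; rewrite (sum3 _ _ nij nik njk) (negbTE nik) Aij /= ?mulr0n ?mulr1n ?mul0r ?add0r ?addr0 in e1.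
have e2 := E j k; rewrite (sum3 _ _ nij nik njk) (negbTE njk) Aji /= ?mulr0n ?mulr1n ?mul0r ?add0r ?addr0 in e2.
have e3 := E k k; rewrite (sum3 _ _ nij nik njk) eqxx /= ?mulr0n ?mulr1n ?mul0r ?add0r ?addr0 in e3.
have e4 := E i i; rewrite (sum3 _ _ nij nik njk) eqxx Aij /= ?mulr0n ?mulr1n ?mul0r ?add0r ?addr0 in e4.
have e5 := E j j; rewrite (sum3 _ _ nij nik njk) eqxx Aji /= ?mulr0n ?mulr1n ?mul0r ?add0r ?addr0 in e5.
have Di : rowsum A i = A i i + A i k by rewrite /rowsum (sum3 _ _ nij nik njk) Aij addr0.
have Dj : rowsum A j = A j j + A j k by rewrite /rowsum (sum3 _ _ nij nik njk) Aji add0r.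
have Gii := pos i i; have Gjj := pos j j; have Gkk := pos k k.
have Gki := pos k i; have Gkj := pos k j; have Gik' := pos i k; have Gjk' := pos j k.
have Gij := pos i j; have Gji := pos j i.
have hk : 0 < G k k.
  rewrite lt_def Gkk andbT; apply/eqP => h; rewrite h mulr0 in e3.
  have : A k i * G i k <= 0 by rewrite mulr_le0_ge0.
  have : A k j * G j k <= 0 by rewrite mulr_le0_ge0.
  lra.
have Aii : 0 <= A i i.
  rewrite leNgt; apply/negP => h.
  have : A i i * G i i <= 0 by rewrite mulr_le0_ge0 // ltW.
  have : A i k * G k i <= 0 by rewrite mulr_le0_ge0.
  lra.
have Ajj : 0 <= A j j.
  rewrite leNgt; apply/negP => h.
  have : A j j * G j j <= 0 by rewrite mulr_le0_ge0 // ltW.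
  have : A j k * G k j <= 0 by rewrite mulr_le0_ge0.
  lra.
have Fi : G k k * rowsum A i = A i i * (G k k - G i k).
  rewrite Di.
  rewrite mulrBr mulrDr; lra.
have Fj : G k k * rowsum A j = A j j * (G k k - G j k).
  rewrite Dj.
  rewrite mulrBr mulrDr; lra.
have Pi : 0 <= rowsum A i.
  rewrite -(pmulr_rge0 _ hk) Fi mulr_ge0 // subr_ge0 //.
have Pj : 0 <= rowsum A j.
  rewrite -(pmulr_rge0 _ hk) Fj mulr_ge0 // subr_ge0 //.
exact: mulr_ge0.
Qed.

Lemma third (i j : 'I_3) : exists2 k : 'I_3, i != k & j != k.
Proof.
case: i => [[|[|[|?]]] Hi] //; case: j => [[|[|[|?]]] Hj] //.
all: first [ solve [exists (@Ordinal 3 0 isT); apply/eqP => /(congr1 val) //]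
            | solve [exists (@Ordinal 3 1 isT); apply/eqP => /(congr1 val) //]
            | solve [exists (@Ordinal 3 2 isT); apply/eqP => /(congr1 val) //] ].
Qed.

Theorem corollary7p1 (R : realType) (Gamma : 'M[R]_3) :
  posdef_mx Gamma ->
  irreducible_mx Gamma ->
  Mmatrix (invmx Gamma) ->
  (forall i j, Gamma i j <= Num.min (Gamma i i) (Gamma j j)) ->
  exists2 c : R, 0 < c &
    forall i j : 'I_3,
      rowsum (invmx Gamma) i * rowsum (invmx Gamma) j < 0 ->
      c <= Num.sqrt ((invmx Gamma) i j /
                     (2 * (rowsum (invmx Gamma) i * rowsum (invmx Gamma) j))).
Proof.
move=> [GT _] _ [Au off pos] hmin.
have Gu : Gamma \in unitmx by rewrite -unitmx_inv.
set A := invmx Gamma in Au off pos *.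
rewrite /A invmxK in pos.
have AG : A *m Gamma = 1%:M := mulVmx Gu.
have AT : A^T = A by rewrite /A trmx_inv GT.
pose f (p : 'I_3 * 'I_3) := if rowsum A p.1 * rowsum A p.2 < 0 then
   Num.sqrt (A p.1 p.2 / (2 * (rowsum A p.1 * rowsum A p.2))) else 1.
exists (\big[Order.min/1]_(p : 'I_3 * 'I_3) f p); last first.
  move=> i j h; apply: le_trans (Order.TotalTheory.bigmin_le _ (i, j) f) _.
  by rewrite /f /= h.
apply/Order.TotalTheory.bigmin_gtP; split => // -[a b] _; rewrite /f /=.
case: ifP => // h.
rewrite sqrtr_gt0.
have nab : a != b.
  apply/negP => /eqP eab; move: h; rewrite eab.
  by rewrite ltNge -expr2 sqr_ge0.
have Aab : A a b != 0.
  apply/negP => /eqP Aab.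
  have [k nak nbk] := third a b.
  have h1 := hmin a k; have h2 := hmin b k; rewrite !le_min in h1 h2.
  case/andP: h1 => _ h1; case/andP: h2 => _ h2.
  have := @key _ A Gamma a b k nab nak nbk AG AT off pos h1 h2 Aab.
  by rewrite leNgt h.
have Aneg : A a b < 0 by rewrite lt_def eq_sym Aab off.
have : 0 < (- A a b) / (- (2 * (rowsum A a * rowsum A b))).
  by rewrite divr_gt0 // ?oppr_gt0 // pmulr_rlt0.
by rewrite invrN mulrNN.
Qed.
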